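(* Let $R$ be any commutative ring with $1$, $n$ a positive integer, $r,s$ nonnegative integers, $V=R^n$, $G=GL_n(R)$. Let $\sigma_{r+s}:R\mathfrak{S}_{r+s}\to\mathrm{End}_G(V^{\otimes r+s})$ and $\sigma_{r,s}:\mathfrak{B}_{r,s}^n\to\mathrm{End}_G(V^{\otimes r}\otimes {V^*}^{\otimes s})$ be the representation maps described in the context. Then: (1) $\sigma_{r,s}$ is surjective if and only if $\sigma_{r+s}$ is surjective; (2) the action of $\mathfrak{B}_{r,s}^n$ on $V^{\otimes r}\otimes {V^*}^{\otimes s}$ is faithful if and only if $n\ge r+s$; (3) the annihilator of $\mathfrak{B}_{r,s}^n$ on $V^{\otimes r}\otimes {V^*}^{\otimes s}$ is free over $R$ if and only if the annihilator of $R\mathfrak{S}_{r+s}$ on $V^{\otimes r+s}$ is free over $R$, and if so they have the same rank.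
   Context: $G=GL_n(R)$ acts naturally on $V=R^n$ (basis $v_1,\dots,v_n$), on $V^*$ by $(gf)(v)=f(g^{-1}v)$, and diagonally on tensor products. A Brauer $m$-diagram is a graph with $m$ vertices in a top row, $m$ in a bottom row and $m$ edges, each vertex lying on exactly one edge. The Brauer algebra $\mathfrak{B}_m^n$ is the free $R$-module on Brauer $m$-diagrams with product $d_1d_2=n^kd_3$, where $d_3$ is obtained by stacking $d_1$ above $d_2$, identifying the bottom row of $d_1$ with the top row of $d_2$, and removing the middle vertices and the $k$ closed cycles. An edge is propagating if its endpoints lie in different rows; totally propagating diagrams span a copy of $R\mathfrak{S}_m$. With $m=r+s$, let $F$ be the first $r$ vertices of each row and $L$ the last $s$. The walled Brauer algebra $\mathfrak{B}_{r,s}^n$ is the $R$-span of diagrams in which every propagating edge has both endpoints in $F$ or both in $L$, and every non-propagating edge has one endpoint in $F$ and one in $L$. A Brauer diagram $d$ acts from the right on $V_1\otimes\cdots\otimes V_m$ (each $V_k\in\{V,V^*\}$, with $V^*$ identified with $V$ via $v_i\mapsto v_i^*$, basis $x_{i_1}\otimes\cdots\otimes x_{i_m}$ indexed by $\mathbf i\in\{1,\dots,n\}^m$) via the matrix $(a_{\mathbf i,\mathbf j})$: write the entries of $\mathbf i$ along the top row and of $\mathbf j$ along the bottom row; $a_{\mathbf i,\mathbf j}=1$ if both ends of every edge carry the same index, and $0$ otherwise. This gives $\sigma_{r+s}$ (action of $R\mathfrak{S}_{r+s}$ on $V^{\otimes r+s}$) and $\sigma_{r,s}$ (action of $\mathfrak{B}_{r,s}^n$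 on $V^{\otimes r}\otimes {V^*}^{\otimes s}$), both with image commuting with $G$. *)

(* Defs.v *)
From HB Require Import structures.
From mathcomp Require Import all_boot all_order all_algebra.
Set Implicit Arguments. Unset Strict Implicit. Unset Printing Implicit Defensive.
Import GRing.Theory.
Local Open Scope ring_scope.

(* Vertices: (true, k) = k-th vertex of the top row,
             (false, k) = k-th vertex of the bottom row. *)
Definition vertex (m : nat) := (bool * 'I_m)%type.

(* A Brauer diagram is a perfect matching of the 2m vertices, encoded as the
   fixed-point-free involution sending each vertex to the other end of its edge. *)
Definition is_brauer (m : nat) (f : {ffun vertex m -> vertex m}) : bool :=
  [forall x, (f (f x) == x) && (f x != x)].

Definition diagram (m : nat) := {f : {ffun vertex m -> vertex m} | is_brauer f}.

Definition partner (m : nat) (d : diagram m) (x : vertex m) : vertex m := (val d) x.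

Definition propagating (m : nat) (d : diagram m) (x : vertex m) : bool :=
  x.1 != (partner d x).1.

(* totally propagating diagrams (span the copy of R S_m) *)
Definition perm_diagram (m : nat) (d : diagram m) : bool :=
  [forall x, propagating d x].

Definition in_F (m r : nat) (x : vertex m) : bool := (x.2 < r)%N.

Definition walled (m r : nat) (d : diagram m) : bool :=
  [forall x, if propagating d x then in_F r x == in_F r (partner d x)
             else in_F r x != in_F r (partner d x)].

(* basis x_i indexed by i in {1..n}^m *)
Definition idx (m n : nat) := {ffun 'I_m -> 'I_n}.

(* Endomorphisms of the free module with basis (x_i)_{i : idx m n} are given by
   matrices E : idx m n -> idx m n -> R, with the convention (matching the
   right action of diagrams) that E sends x_i to  sum_j E i j x_j. *)

Definition label (m n : nat) (i j : idx m n) (x : vertex m) : 'I_n :=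
  if x.1 then i x.2 else j x.2.

Definition diag_mx (R : comNzRingType) (m n : nat) (d : diagram m)
    (i j : idx m n) : R :=
  if [forall x, label i j (partner d x) == label i j x] then 1 else 0.

Notation brauer_elt R m := {ffun diagram m -> GRing.ComNzRing.sort R}.

(* support condition: x lies in the R-span of the diagrams satisfying P *)
Definition supported (R : comNzRingType) (m : nat) (P : pred (diagram m))
    (x : brauer_elt R m) : Prop :=
  forall d, ~~ P d -> x d = 0.

Definition sigma (R : comNzRingType) (m n : nat) (x : brauer_elt R m)
    (i j : idx m n) : R :=
  \sum_(d : diagram m) x d * diag_mx R d i j.

(* g in GL_n(R) with inverse h.  On V_1 ⊗...⊗ V_m where the first p factors
   are V and the remaining m - p are V^*:  g x_i = sum_j rho i j x_j with
   rho i j = prod_{k<p} g(j_k, i_k) * prod_{k>=p} h(i_k, j_k)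
   (g v_b = sum_a g(a,b) v_a and g v_b^* = sum_a h(b,a) v_a^* ). *)
Definition rho (R : comNzRingType) (m n p : nat) (g h : 'M[R]_n)
    (i j : idx m n) : R :=
  \prod_(k < m) (if (k < p)%N then g (j k) (i k) else h (i k) (j k)).

Definition commutes (R : comNzRingType) (m n : nat)
    (E P : idx m n -> idx m n -> R) : Prop :=
  forall i j, \sum_(k : idx m n) E i k * P k j = \sum_(k : idx m n) P i k * E k j.

Definition End_G (R : comNzRingType) (m n p : nat)
    (E : idx m n -> idx m n -> R) : Prop :=
  forall g h : 'M[R]_n, g *m h = 1%:M -> h *m g = 1%:M ->
    commutes E (rho p g h).

Definition sigma_surj (R : comNzRingType) (m n p : nat) (P : pred (diagram m)) : Prop :=
  forall E : idx m n -> idx m n -> R, End_G p E ->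
    exists x : brauer_elt R m, supported P x /\ forall i j, sigma x i j = E i j.

Definition ann (R : comNzRingType) (m n : nat) (P : pred (diagram m))
    (x : brauer_elt R m) : Prop :=
  supported P x /\ forall i j : idx m n, sigma x i j = 0.

Definition free_of_rank (R : comNzRingType) (D : finType)
    (S : {ffun D -> R} -> Prop) (k : nat) : Prop :=
  exists b : 'I_k -> {ffun D -> R},
    (forall l, S (b l)) /\
    (forall c : 'I_k -> R,
        (forall d, \sum_(l < k) c l * b l d = 0) -> forall l, c l = 0) /\
    (forall x, S x -> exists c : 'I_k -> R,
        forall d, x d = \sum_(l < k) c l * b l d).

(* Main.v *)
Require Import Defs.
From HB Require Import structures.
From mathcomp Require Import all_boot all_order all_algebra all_fingroup.
From Stdlib Require Import ClassicalEpsilon FunctionalExtensionality.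
Set Implicit Arguments. Unset Strict Implicit. Unset Printing Implicit Defensive.
Import GRing.Theory.

Section Gen.
Local Open Scope ring_scope.

Lemma partnerK m (d : diagram m) x : partner d (partner d x) = x.
Proof. by have /forallP/(_ x)/andP[/eqP] := valP d. Qed.
Lemma partner_neq m (d : diagram m) x : partner d x != x.
Proof. by have /forallP/(_ x)/andP[_] := valP d. Qed.
Lemma perm_partner m (d : diagram m) x : perm_diagram d -> (partner d x).1 = ~~ x.1.
Proof.
move=> /forallP/(_ x); rewrite /propagating.
by case: (x.1) (partner d x).1 => [] [].
Qed.

Section Transp.
Variables (R : comNzRingType) (m r n : nat).

Definition sw (x : vertex m) : vertex m := if (x.2 < r)%N then x else (~~ x.1, x.2).
Lemma swK : involutive sw.
Proof. case=> b k; rewrite /sw /=; case hk: (k < r)%N => /=; by rewrite ?hk ?negbK. Qed.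
Lemma sw1 (z : vertex m) : (sw z).1 = if (z.2 < r)%N then z.1 else ~~ z.1.
Proof. by rewrite /sw; case: ifP. Qed.

Definition Tf (f : {ffun vertex m -> vertex m}) : {ffun vertex m -> vertex m} :=
  [ffun x => sw (f (sw x))].
Lemma Tf_brauer f : is_brauer f -> is_brauer (Tf f).
Proof.
move=> /forallP H; apply/forallP => x; rewrite !ffunE swK.
have /andP[/eqP -> ne] := H (sw x); rewrite swK eqxx /=.
apply: contra ne => /eqP e; apply/eqP; apply: (can_inj swK); by rewrite swK e.
Qed.
Definition Td (d : diagram m) : diagram m := exist _ (Tf (val d)) (Tf_brauer (valP d)).
Lemma TdK : involutive Td.
Proof. move=> d; apply: val_inj => /=; apply/ffunP => x; by rewrite !ffunE !swK. Qed.
Lemma partnerTd d x : partner (Td d) x = sw (partner d (sw x)).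
Proof. by rewrite /partner /= ffunE. Qed.

Lemma walled_Td d : walled r d = perm_diagram (Td d).
Proof.
apply/forallP/forallP => H.
- move=> x; rewrite -(swK x); move: (sw x) => y.
  rewrite /propagating partnerTd swK !sw1.
  move: (H y); rewrite /propagating /in_F.
  case: y => b k /=; case: (partner d (b, k)) => b' k' /=.
  by case: b; case: b'; case: (k < r)%N; case: (k' < r)%N.
- move=> y; move: (H (sw y)); rewrite /propagating partnerTd swK !sw1 /in_F.
  case: y => b k /=; case: (partner d (b, k)) => b' k' /=.
  by case: b; case: b'; case: (k < r)%N; case: (k' < r)%N.
Qed.

Definition mix (i j : idx m n) : idx m n := [ffun k : 'I_m => if (k < r)%N then i k else j k].
Lemma mixK i j : mix (mix i j) (mix j i) = i.
Proof. apply/ffunP => k; rewrite !ffunE; by case: ifP => h; rewrite h. Qed.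
Lemma label_sw i j x : label (mix i j) (mix j i) (sw x) = label i j x.
Proof.
case: x => b k; rewrite /label /sw /=; case hk: (k < r)%N; rewrite /= !ffunE hk //.
by case: b.
Qed.
Lemma label_sw' i j x : label i j (sw x) = label (mix i j) (mix j i) x.
Proof. by have := label_sw (mix i j) (mix j i) x; rewrite !mixK. Qed.

Lemma diag_Td d i j : Defs.diag_mx R (Td d) i j = Defs.diag_mx R d (mix i j) (mix j i).
Proof.
rewrite /Defs.diag_mx; congr (if _ then _ else _).
apply/forallP/forallP => H x.
- by move: (H (sw x)); rewrite partnerTd swK !label_sw'.
- by have := H (sw x); rewrite -!label_sw' swK partnerTd.
Qed.

Definition tr (x : brauer_elt R m) : brauer_elt R m := [ffun d => x (Td d)].
Lemma trK : involutive tr.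
Proof. move=> x; apply/ffunP => d; by rewrite !ffunE TdK. Qed.
Lemma sigma_tr x i j : sigma (tr x) i j = sigma x (mix i j) (mix j i).
Proof.
rewrite /sigma (reindex_inj (can_inj TdK)) /=.
apply: eq_bigr => d _; by rewrite ffunE TdK diag_Td.
Qed.

Lemma supp_wp x : supported (walled r) x -> supported (@perm_diagram m) (tr x).
Proof. move=> Hs d nd; rewrite ffunE; apply: Hs; by rewrite walled_Td TdK. Qed.
Lemma supp_pw x : supported (@perm_diagram m) x -> supported (walled r) (tr x).
Proof. move=> Hs d nd; rewrite ffunE; apply: Hs; by rewrite -walled_Td. Qed.

Lemma ann_tr x : @ann R m n (walled r) x <-> @ann R m n (@perm_diagram m) (tr x).
Proof.
split=> [[Hs Hz]|[Hs Hz]]; split.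
- exact: supp_wp.
- move=> i j; by rewrite sigma_tr Hz.
- by rewrite -(trK x); apply: supp_pw.
- move=> i j; have := Hz (mix i j) (mix j i); by rewrite sigma_tr !mixK.
Qed.
Lemma ann_tr' x : @ann R m n (@perm_diagram m) x <-> @ann R m n (walled r) (tr x).
Proof. by rewrite ann_tr trK. Qed.

End Transp.
End Gen.
Section EndG.
Local Open Scope ring_scope.
Variables (R : comNzRingType) (m n : nat).
Implicit Types (E P Q : idx m n -> idx m n -> R).

Definition mmul (A B : idx m n -> idx m n -> R) i j := \sum_k A i k * B k j.
Definition delta (i j : idx m n) : R := (i == j)%:R.

Lemma mmulA A B C : mmul (mmul A B) C = mmul A (mmul B C).
Proof.
apply: functional_extensionality => i; apply: functional_extensionality => j.
rewrite /mmul; under eq_bigr do rewrite mulr_suml.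
under [RHS]eq_bigr do rewrite mulr_sumr.
rewrite exchange_big /=; apply: eq_bigr => k _; apply: eq_bigr => l _; by rewrite mulrA.
Qed.

Lemma mmul1l A : mmul delta A = A.
Proof.
apply: functional_extensionality => i; apply: functional_extensionality => j.
rewrite /mmul /delta (bigD1 i) //= eqxx mul1r big1 ?addr0 // => k nk.
by rewrite eq_sym (negbTE nk) mul0r.
Qed.

Lemma prod_delta (c d : 'I_m -> 'I_n -> 'I_n -> R) :
  (forall t x y, \sum_a c t x a * d t a y = (x == y)%:R) ->
  forall i j : idx m n,
    \sum_(k : idx m n) (\prod_t c t (i t) (k t)) * (\prod_t d t (k t) (j t)) = (i == j)%:R.
Proof.
move=> H i j.
under eq_bigr do rewrite -big_split /=.
rewrite -(bigA_distr_bigA (fun t a => c t (i t) a * d t a (j t))) /=.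
under eq_bigr do rewrite H.
case: (eqVneq i j) => [<-|ne]; first by rewrite big1 // => t _; rewrite eqxx.
case: (boolP [exists t, i t != j t]) => [/existsP[t ht]|/existsPn H'].
  by rewrite (bigD1 t) //= (negbTE ht) mul0r.
case/eqP: ne; apply/ffunP => t; apply/eqP; by rewrite -[_ == _]negbK H'.
Qed.

Lemma mx_id (g h : 'M[R]_n) : h *m g = 1%:M -> forall x y, \sum_a h x a * g a y = (x == y)%:R.
Proof. move=> e x y; have := congr1 (fun M : 'M[R]_n => M x y) e; by rewrite !mxE. Qed.

Lemma rho_inv p (g h : 'M[R]_n) : g *m h = 1%:M -> h *m g = 1%:M ->
  mmul (rho p g h) (rho p h g) = delta.
Proof.
move=> gh hg; apply: functional_extensionality => i; apply: functional_extensionality => j.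
rewrite /mmul /rho /delta.
apply: (prod_delta (c := fun t x a => if (t < p)%N then g a x else h x a)
                   (d := fun t a y => if (t < p)%N then h y a else g a y)).
move=> t x y /=; case: (t < p)%N.
- under eq_bigr do rewrite mulrC. by rewrite mx_id // eq_sym.
- by rewrite mx_id.
Qed.

Lemma commutesE E P : commutes E P <-> mmul E P = mmul P E.
Proof.
split=> [H|e i j].
- apply: functional_extensionality => i; apply: functional_extensionality => j; exact: H.
- exact: (congr1 (fun F => F i j) e).
Qed.

Lemma comm_fix p g h E : g *m h = 1%:M -> h *m g = 1%:M ->
  commutes E (rho p g h) <-> E = mmul (mmul (rho p h g) E) (rho p g h).
Proof.
move=> gh hg; rewrite commutesE; split=> e.
- by rewrite mmulA e -mmulA rho_inv // mmul1l.
- by rewrite {2}e -!mmulA rho_inv // mmul1l.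
Qed.

Definition Fx p g h E := forall i j,
  E i j = \sum_k \sum_l (rho p h g i k * rho p g h l j) * E k l.

Lemma fixE p g h E : E = mmul (mmul (rho p h g) E) (rho p g h) <-> Fx p g h E.
Proof.
have DS : forall i j, mmul (mmul (rho p h g) E) (rho p g h) i j =
   \sum_k \sum_l (rho p h g i k * rho p g h l j) * E k l.
  move=> i j; rewrite /mmul; under eq_bigr do rewrite mulr_suml.
  rewrite exchange_big /=; apply: eq_bigr => k _; apply: eq_bigr => l _; by rewrite mulrAC.
split=> [e i j|F].
- by rewrite -DS -e.
- apply: functional_extensionality => i; apply: functional_extensionality => j; by rewrite DS -F.
Qed.

Definition pt r E i j := E (mix r i j) (mix r j i).
Lemma ptK r E : pt r (pt r E) = E.
Proof. apply: functional_extensionality => i; apply: functional_extensionality => j; by rewrite /pt !mixK. Qed.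

Lemma W_mix r (g h : 'M[R]_n) (i j k l : idx m n) :
  rho r h g (mix r i j) (mix r k l) * rho r g h (mix r l k) (mix r j i) = rho m h g i k * rho m g h l j.
Proof.
rewrite /rho -!big_split; apply: eq_bigr => t _; rewrite !ffunE ltn_ord.
by case: (t < r)%N => //=; rewrite [LHS]mulrC.
Qed.

Lemma dsum_mix r (F : idx m n -> idx m n -> R) :
  \sum_k \sum_l F k l = \sum_k \sum_l F (mix r k l) (mix r l k).
Proof.
rewrite !pair_bigA /=.
have hK : cancel (fun p : idx m n * idx m n => (mix r p.1 p.2, mix r p.2 p.1))
                 (fun p : idx m n * idx m n => (mix r p.1 p.2, mix r p.2 p.1)).
  by case=> a b /=; rewrite !mixK.
by rewrite (reindex_inj (can_inj hK)).
Qed.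

Lemma fix_rm r g h E : Fx r g h E -> Fx m g h (pt r E).
Proof.
move=> H i j; rewrite {1}/pt H (dsum_mix r).
apply: eq_bigr => k _; apply: eq_bigr => l _; by rewrite W_mix.
Qed.

Lemma fix_mr r g h E : Fx m g h E -> Fx r g h (pt r E).
Proof.
move=> H i j; rewrite {1}/pt H (dsum_mix r).
apply: eq_bigr => k _; apply: eq_bigr => l _; by rewrite -(W_mix r) !mixK.
Qed.

Lemma endG_pt r E : End_G r E <-> End_G m (pt r E).
Proof.
split=> H g h gh hg; have := H g h gh hg.
- move/(comm_fix _ _ gh hg)/fixE => F; apply/(comm_fix _ _ gh hg)/fixE; exact: fix_rm.
- move/(comm_fix _ _ gh hg)/fixE/(@fix_mr r) => F; rewrite -(ptK r E).
  by apply/(comm_fix _ _ gh hg)/fixE.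
Qed.

End EndG.
Section Rank.
Local Open Scope ring_scope.
Variable R : comNzRingType.

Lemma no_pad k t (C : 'M[R]_(k + t.+1, k)) (E : 'M[R]_(k, k + t.+1)) : C *m E = 1%:M -> False.
Proof.
move=> e.
have : \det (row_mx C (0 : 'M_(k + t.+1, t.+1)) *m col_mx E (0 : 'M_(t.+1, k + t.+1))) = 1.
  by rewrite mul_row_col mul0mx addr0 e det1.
rewrite det_mulmx -[C]vsubmxK -[X in row_mx _ X]col_mx0 -block_mxEh det_lblock det0 mulr0 mul0r.
move/eqP; by rewrite eq_sym oner_eq0.
Qed.

Lemma inv_rank k1 k2 (c : 'I_k1 -> 'I_k2 -> R) (e : 'I_k2 -> 'I_k1 -> R) :
  (forall l p, \sum_q c l q * e q p = (l == p)%:R) -> (k1 <= k2)%N.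
Proof.
move=> H; rewrite leqNgt; apply/negP => lt.
have [t ht] : exists t, k1 = (k2 + t.+1)%N by exists (k1 - k2.+1)%N; rewrite addnS -addSn subnKC.
subst k1; apply: (@no_pad k2 t (\matrix_(l, q) c l q) (\matrix_(q, p) e q p)).
apply/matrixP => l p; rewrite !mxE; under eq_bigr do rewrite !mxE; exact: H.
Qed.

Lemma free_rank (D : finType) (S : {ffun D -> R} -> Prop) k1 k2 :
  free_of_rank S k1 -> free_of_rank S k2 -> (k1 <= k2)%N.
Proof.
move=> [b1 [S1 [I1 G1]]] [b2 [S2 [I2 G2]]].
pose c l := proj1_sig (constructive_indefinite_description _ (G2 _ (S1 l))).
pose e q := proj1_sig (constructive_indefinite_description _ (G1 _ (S2 q))).
have Hc l d : b1 l d = \sum_q c l q * b2 q d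
  := proj2_sig (constructive_indefinite_description _ (G2 _ (S1 l))) d.
have He q d : b2 q d = \sum_p e q p * b1 p d
  := proj2_sig (constructive_indefinite_description _ (G1 _ (S2 q))) d.
apply: (@inv_rank k1 k2 c e) => l p.
have key : forall d, \sum_p0 ((\sum_q c l q * e q p0) - (l == p0)%:R) * b1 p0 d = 0.
  move=> d; under eq_bigr do rewrite mulrBl.
  rewrite sumrB.
  have E1 : \sum_p0 (\sum_q c l q * e q p0) * b1 p0 d = b1 l d.
    rewrite Hc; under eq_bigr do rewrite mulr_suml.
    rewrite exchange_big /=; apply: eq_bigr => q _; rewrite He mulr_sumr.
    apply: eq_bigr => p0 _; by rewrite mulrA.
  have E2 : \sum_p0 (l == p0)%:R * b1 p0 d = b1 l d.
    rewrite (bigD1 l) //= eqxx mul1r big1 ?addr0 // => p0 np.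
    by rewrite eq_sym (negbTE np) mul0r.
  by rewrite E1 E2 subrr.
have := I1 (fun p0 => \sum_q c l q * e q p0 - (l == p0)%:R) key p.
by move/eqP; rewrite subr_eq0 => /eqP.
Qed.

Lemma free_tr (D : finType) (t : D -> D) (tK : involutive t) (S S' : {ffun D -> R} -> Prop) k :
  (forall x, S x -> S' [ffun d => x (t d)]) -> (forall x, S' x -> S [ffun d => x (t d)]) ->
  free_of_rank S k -> free_of_rank S' k.
Proof.
move=> h1 h2 [b [Sb [Ib Gb]]].
exists (fun l => [ffun d => b l (t d)]); split; [|split].
- move=> l; exact: h1.
- move=> c H l; apply: Ib => d; rewrite -[RHS](H (t d)); apply: eq_bigr => l' _; by rewrite ffunE tK.
- move=> x Sx; have [c Hc] := Gb _ (h2 _ Sx); exists c => d.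
  have := Hc (t d); rewrite ffunE tK => ->; apply: eq_bigr => l _; by rewrite ffunE.
Qed.

End Rank.
Section Faith.
Local Open Scope ring_scope.
Variables (R : comNzRingType) (m n : nat).

Definition Df (s : 'S_m) : {ffun vertex m -> vertex m} :=
  [ffun x : vertex m => if x.1 then (false, s x.2) else (true, (s^-1)%g x.2)].
Lemma Df_brauer s : is_brauer (Df s).
Proof. apply/forallP => [[[] k]]; by rewrite !ffunE /= ?permK ?permKV eqxx. Qed.
Definition Dd s : diagram m := exist _ (Df s) (Df_brauer s).
Lemma Dd_perm s : perm_diagram (Dd s).
Proof. apply/forallP => [[[] k]]; by rewrite /propagating /partner /= ffunE. Qed.
Lemma Dd_inj : injective Dd.
Proof.
move=> s1 s2 e; apply/permP => k.
have := congr1 (fun d => partner d (true, k)) e; rewrite /partner /= !ffunE /=; by case.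
Qed.

Lemma diagDd s (i j : idx m n) :
  Defs.diag_mx R (Dd s) i j = if [forall k, j (s k) == i k] then 1 else 0.
Proof.
rewrite /Defs.diag_mx; congr (if _ then _ else _); apply/forallP/forallP => H.
- move=> k; by have := H (true, k); rewrite /partner /= ffunE.
- case=> [[] k]; rewrite /partner /= ffunE /label /=; first exact: H.
  by have := H ((s^-1)%g k); rewrite permKV eq_sym.
Qed.

Lemma perm_faithful (le : (m <= n)%N) (x : brauer_elt R m) :
  @ann R m n (@perm_diagram m) x -> x = 0.
Proof.
move=> [Hs Hz]; apply/ffunP => d; rewrite ffunE.
case: (boolP (perm_diagram d)) => pd; last exact: Hs.
pose i : idx m n := [ffun k => widen_ord le k].
pose j : idx m n := [ffun l => i (partner d (false, l)).2].
have i_inj : injective i by move=> a b; rewrite !ffunE => /(congr1 val) /= /ord_inj.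
have Htrue : forall d', perm_diagram d' ->
    [forall z, label i j (partner d' z) == label i j z] ->
    forall k, partner d' (true, k) = partner d (true, k).
  move=> d' pd' /forallP H k.
  case E': (partner d' (true, k)) => [b l].
  have b0 : b = false by have := perm_partner (true, k) pd'; rewrite E'.
  subst b.
  have := H (true, k); rewrite E' /label /= /j ffunE.
  case E: (partner d (false, l)) => [b' k'] /=.
  move/eqP/i_inj => kk; subst k'.
  have b1 : b' = true by have := perm_partner (false, l) pd; rewrite E.
  subst b'; by rewrite -E partnerK.
have Heq : forall d', perm_diagram d' ->
    [forall z, label i j (partner d' z) == label i j z] -> d' = d.
  move=> d' pd' c; apply: val_inj; apply/ffunP => [[[] k]]; first exact: Htrue.
  change (partner d' (false, k) = partner d (false, k)).
  case E': (partner d' (false, k)) => [b l].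
  have b1 : b = true by have := perm_partner (false, k) pd'; rewrite E'.
  subst b.
  have := Htrue d' pd' c l; rewrite -E' partnerK => e.
  rewrite E' in e; by rewrite E' e partnerK.
have Hd : [forall z, label i j (partner d z) == label i j z].
  apply/forallP => [[[] k]].
  - case E: (partner d (true, k)) => [b l].
    have b0 : b = false by have := perm_partner (true, k) pd; rewrite E.
    subst b; rewrite /label /= /j ffunE -E partnerK /=.
    by rewrite eqxx.
  - case E: (partner d (false, k)) => [b l].
    have b1 : b = true by have := perm_partner (false, k) pd; rewrite E.
    subst b; rewrite /label /= /j !ffunE; by case: (partner d (false, k)) E => ? ? [_ ->].
have S : sigma x i j = x d.
  rewrite /sigma (bigD1 d) //= big1.
  - by rewrite /Defs.diag_mx Hd mulr1 addr0.
  - move=> d' nd'; case: (boolP (perm_diagram d')) => pd'; last by rewrite Hs ?mul0r.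
    rewrite /Defs.diag_mx; case: ifP => c; last by rewrite mulr0.
    by move: nd'; rewrite (Heq d' pd' c) eqxx.
by rewrite -S Hz.
Qed.


Definition inA (s : 'S_m) : bool := [forall k : 'I_m, (n < k)%N ==> (s k == k)].

Lemma perm_not_faithful (lt : (n < m)%N) :
  exists y : brauer_elt R m, @ann R m n (@perm_diagram m) y /\ y != 0.
Proof.
pose y : brauer_elt R m :=
  [ffun d => \sum_(s | inA s) (if Dd s == d then (-1) ^+ odd_perm s else 0)].
exists y; split; [split|].
- move=> d nd; rewrite ffunE big1 // => s _; case: eqP => // e.
  by move: nd; rewrite -e Dd_perm.
- move=> i j.
  have -> : sigma y i j = \sum_(s | inA s) (-1) ^+ odd_perm s * Defs.diag_mx R (Dd s) i j.
    rewrite /sigma; under eq_bigr do rewrite ffunE mulr_suml.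
    rewrite exchange_big /=; apply: eq_bigr => s _.
    rewrite (bigD1 (Dd s)) //= eqxx big1 ?addr0 // => d nd.
    by rewrite eq_sym (negbTE nd) mul0r.
  have le : (n.+1 <= m)%N := lt.
  pose f : 'I_n.+1 -> 'I_n := fun k => i (widen_ord le k).
  have : [exists a : 'I_n.+1, exists b : 'I_n.+1, (a != b) && (f a == f b)].
    case: (boolP [exists a : 'I_n.+1, exists b : 'I_n.+1, (a != b) && (f a == f b)]) => // /existsPn H.
    have inj : injective f.
      move=> a b e; apply/eqP; apply/negPn/negP => nab.
      by have := H a; move/existsPn/(_ b); rewrite nab e eqxx.
    by have := leq_card f inj; rewrite !card_ord ltnn.
  case/existsP => a0 /existsP [b0 /andP [nab0 /eqP fab]].
  pose a := widen_ord le a0; pose b := widen_ord le b0.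
  have nab : a != b.
    apply: contra nab0 => /eqP/(congr1 val) /= e; apply/eqP; exact: ord_inj.
  pose tau := tperm a b.
  have itau : forall k, i (tau k) = i k.
    move=> k; rewrite /tau; case: tpermP => [->|->|//] //; by rewrite /f in fab.
  have Atau : forall s, inA (tau * s)%g = inA s.
    move=> s; apply: eq_forallb => k; case: (ltnP n k) => h //=.
    rewrite permM /tau tpermD //.
    + apply/eqP => e; move: h; rewrite -e /= => h.
      by have := ltn_ord a0; rewrite ltnS leqNgt h.
    + apply/eqP => e; move: h; rewrite -e /= => h.
      by have := ltn_ord b0; rewrite ltnS leqNgt h.
  have dtau : forall s, Defs.diag_mx R (Dd (tau * s)%g) i j = Defs.diag_mx R (Dd s) i j.
    move=> s; rewrite !diagDd; congr (if _ then _ else _).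
    apply/forallP/forallP => H k.
    + by have := H (tau k); rewrite permM tpermK itau.
    + by rewrite permM; have := H (tau k); rewrite itau.
  have sgtau : forall s, (-1) ^+ odd_perm (tau * s)%g = - (-1) ^+ odd_perm s :> R.
    move=> s; rewrite odd_permM odd_tperm nab /=.
    by case: (odd_perm s); rewrite /= ?expr0 ?expr1 ?opprK.
  rewrite (bigID (fun s => odd_perm s)) /=.
  rewrite (reindex_inj (mulgI tau)) /=.
  have -> : \sum_(s | inA (tau * s)%g && odd_perm (tau * s)%g)
      (-1) ^+ odd_perm (tau * s)%g * Defs.diag_mx R (Dd (tau * s)%g) i j =
      \sum_(s | inA s && ~~ odd_perm s) - ((-1) ^+ odd_perm s * Defs.diag_mx R (Dd s) i j).
    apply: eq_big => s.
    * by rewrite Atau odd_permM odd_tperm nab.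
    * by move=> _; rewrite sgtau dtau mulNr.
  by rewrite sumrN addNr.
- apply/eqP => /ffunP /(_ (Dd 1%g)); rewrite !ffunE.
  have A1 : inA 1%g by apply/forallP => k; rewrite perm1 eqxx implybT.
  rewrite (bigD1 1%g) //= eqxx odd_perm1 expr0 big1 ?addr0.
  + by move/eqP; rewrite oner_eq0.
  + move=> s /andP [_ ns]; by rewrite (inj_eq Dd_inj) (negbTE ns).
Qed.

End Faith.

Lemma tr0 (R : comNzRingType) m r : tr r (0%R : brauer_elt R m) = 0%R.
Proof. by apply/ffunP => d; rewrite !ffunE. Qed.

Theorem theorem1p1 (R : comNzRingType) (n r s : nat) (hn : (0 < n)%N) :
  (* (1) sigma_{r,s} surjective <-> sigma_{r+s} surjective *)
  (@sigma_surj R (r + s) n r (@walled (r + s) r)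
     <-> @sigma_surj R (r + s) n (r + s) (@perm_diagram (r + s))) /\
  (* (2) the walled Brauer algebra acts faithfully <-> n >= r + s *)
  ((forall x : brauer_elt R (r + s), @ann R (r + s) n (@walled (r + s) r) x -> x = 0%R)
     <-> (r + s <= n)%N) /\
  (* (3) annihilators: free simultaneously, and then of the same rank *)
  ((exists k, @free_of_rank R (diagram (r + s)) (@ann R (r + s) n (@walled (r + s) r)) k)
     <-> (exists k, @free_of_rank R (diagram (r + s)) (@ann R (r + s) n (@perm_diagram (r + s))) k)) /\
  (forall k1 k2,
     @free_of_rank R (diagram (r + s)) (@ann R (r + s) n (@walled (r + s) r)) k1 ->
     @free_of_rank R (diagram (r + s)) (@ann R (r + s) n (@perm_diagram (r + s))) k2 -> k1 = k2).
Proof.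
split; [|split; [|split]].
- split => H E HE.
  + have HE' : End_G r (pt r E) by apply/endG_pt; rewrite ptK.
    have [x [sx ex]] := H _ HE'.
    exists (tr r x); split; first exact: supp_wp.
    move=> i j; by rewrite sigma_tr ex /pt !mixK.
  + have HE' : End_G (r + s) (pt r E) by exact: (endG_pt r E).1.
    have [x [sx ex]] := H _ HE'.
    exists (tr r x); split; first exact: supp_pw.
    move=> i j; by rewrite sigma_tr ex /pt !mixK.
- split => H.
  + rewrite leqNgt; apply/negP => lt.
    have [y [ay ny]] := @perm_not_faithful R (r + s) n lt.
    have e := H _ ((ann_tr' r n y).1 ay).
    by move: ny; rewrite -(trK r y) e tr0 eqxx.
  + move=> x ax; have e := @perm_faithful R (r + s) n H _ ((ann_tr r n x).1 ax).
    by rewrite -(trK r x) e tr0.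
- split=> [[k F]|[k F]]; exists k.
  + apply: (free_tr (@TdK (r + s) r) _ _ F) => x; [exact: (ann_tr r n x).1 | exact: (ann_tr' r n x).1].
  + apply: (free_tr (@TdK (r + s) r) _ _ F) => x; [exact: (ann_tr' r n x).1 | exact: (ann_tr r n x).1].
- move=> k1 k2 F1 F2.
  have F1' := free_tr (@TdK (r + s) r) (fun x => (ann_tr r n x).1) (fun x => (ann_tr' r n x).1) F1.
  by apply/eqP; rewrite eqn_leq (free_rank F1' F2) (free_rank F2 F1').
Qed.
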